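(* Let $n\ge 3$ and let $c=(c_1,\dots,c_n)\in\{-1,+1\}^n$ be such that the cyclic sequence $(c_1,\dots,c_n,-c_1,\dots,-c_n)$ of length $2n$ contains no $n-1$ cyclically consecutive equal entries. Set $\varphi_1=0$, $\varphi_{n+1}=\pi$, and for $\varphi=(\varphi_2,\dots,\varphi_n)\in\mathbb{R}^{n-1}$, $y=(y_1,y_2)\in\mathbb{R}^2$ define \[ f(\varphi)=-\sum_{j=1}^{n}2\sin\frac{\varphi_{j+1}-\varphi_j}{2},\quad g_1(\varphi)=\sum_{j=2}^{n}(c_{j-1}-c_j)\cos\varphi_j-(c_1+c_n),\quad g_2(\varphi)=\sum_{j=2}^{n}(c_{j-1}-c_j)\sin\varphi_j, \] $L(\varphi,y)=f(\varphi)+y_1g_1(\varphi)+y_2g_2(\varphi)$, let $H(\varphi,y)$ be the Hessian of $L$ with respect to $(\varphi_2,\dots,\varphi_n)$, let $C(\varphi)$ be the $2\times(n-1)$ Jacobian of $(g_1,g_2)$ with respect to $(\varphi_2,\dots,\varphi_n)$, and let \[ K(\varphi,y)=\begin{pmatrix}H(\varphi,y)& C(\varphi)^T\\ C(\varphi)&0\end{pmatrix}. \] Let $w^\ast=(\varphi^\ast,0)$ with $\varphi^\ast_j=(j-1)\pi/n$ for $j=2,\dots,n$. Then $K$ is invertible at every point of some neighborhood of $w^\ast$ in $\mathbb{R}^{n-1}\times\mathbb{R}^2$. *)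

(* Defs.v *)
From HB Require Import structures.
From mathcomp Require Import all_boot all_order all_algebra.
From mathcomp Require Import all_classical all_reals all_analysis.
Set Implicit Arguments. Unset Strict Implicit. Unset Printing Implicit Defensive.
Import Order.TTheory GRing.Theory Num.Theory.
Import numFieldNormedType.Exports.
Local Open Scope ring_scope.

Section Defs.
Variable R : realType.
Variable n : nat.
(* c is indexed 1-based: c 1, ..., c n are the relevant entries *)
Variable c : nat -> R.

Definition cseq (k : nat) : R := if (k < n)%N then c k.+1 else - c (k - n).+1.

Definition no_long_run : Prop :=
  forall k : nat, (k < 2 * n)%N ->
    ~ (forall t : nat, (t < n - 1)%N -> cseq ((k + t) %% (2 * n)) = cseq k).

Definition vget m (v : 'rV[R]_m) (i : nat) : R :=
  match (insub i : option 'I_m) with Some j => v 0 j | None => 0 end.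

(* 1-based angles: phi_1 = 0, phi_(n+1) = pi, phi_j = v_(j-2) for 2 <= j <= n *)
Definition ang (v : 'rV[R]_(n.-1)) (j : nat) : R :=
  if (j <= 1)%N then 0 else if (j <= n)%N then vget v (j - 2) else pi.

Definition fobj (v : 'rV[R]_(n.-1)) : R :=
  - \sum_(1 <= j < n.+1) 2 * sin ((ang v j.+1 - ang v j) / 2).

Definition g1 (v : 'rV[R]_(n.-1)) : R :=
  \sum_(2 <= j < n.+1) (c j.-1 - c j) * cos (ang v j) - (c 1 + c n).

Definition g2 (v : 'rV[R]_(n.-1)) : R :=
  \sum_(2 <= j < n.+1) (c j.-1 - c j) * sin (ang v j).

Definition Lag (v : 'rV[R]_(n.-1)) (y : 'rV[R]_2) : R :=
  fobj v + y 0 0 * g1 v + y 0 1 * g2 v.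

Definition ebas (i : 'I_(n.-1)) : 'rV[R]_(n.-1) := delta_mx 0 i.

Definition Hess (v : 'rV[R]_(n.-1)) (y : 'rV[R]_2) : 'M[R]_(n.-1) :=
  \matrix_(i, j) ('D_(ebas i) ('D_(ebas j) (fun u => Lag u y)) v).

Definition Jac (v : 'rV[R]_(n.-1)) : 'M[R]_(2, n.-1) :=
  \matrix_(k < 2, j < n.-1)
    (if k == 0 then 'D_(ebas j) g1 v else 'D_(ebas j) g2 v).

Definition KKT (v : 'rV[R]_(n.-1)) (y : 'rV[R]_2) : 'M[R]_(n.-1 + 2) :=
  block_mx (Hess v y) (Jac v)^T (Jac v) 0.

Definition phistar : 'rV[R]_(n.-1) :=
  \row_(i < n.-1) ((i.+1)%:R * pi / n%:R).

End Defs.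

(* Main.v *)
Require Import Defs.
From HB Require Import structures.
From mathcomp Require Import all_boot all_order all_algebra.
From mathcomp Require Import all_classical all_reals all_analysis.
From mathcomp Require Import ring lra zify.
Set Implicit Arguments. Unset Strict Implicit. Unset Printing Implicit Defensive.
Import Order.TTheory GRing.Theory Num.Theory.
Import numFieldNormedType.Exports.
Local Open Scope classical_set_scope.
Local Open Scope ring_scope.

Section Der.
Variables (R : realType) (V : normedModType R).
Implicit Types (f l : V -> R) (x e : V).

Lemma derive_slice f x e : 'D_e f x = 'D_1 (fun t : R => f (t *: e + x)) 0.
Proof.
rewrite /derive; set g1 := fun h => h^-1 *: _; set g2 := fun h => h^-1 *: _.
suff -> : g1 = g2 by [].
by rewrite funeqE /g1 /g2 => h /=; rewrite addr0 scale0r add0r [_%:A]mulr1.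
Qed.

Lemma isd_slice f x e d :
  is_derive (0:R) 1 (fun t : R => f (t *: e + x)) d -> is_derive x e f d.
Proof.
move=> H; split; first by apply/derivable1P; exact: ex_derive.
by rewrite derive_slice derive_val.
Qed.

Lemma isd_unslice f x e d :
  is_derive x e f d -> is_derive (0:R) 1 (fun t : R => f (t *: e + x)) d.
Proof.
case=> D DV; split; first by move/derivable1P: D.
by rewrite -(derive_slice f x e).
Qed.

Lemma isd_ext f g x e d : is_derive x e f d -> (forall u, f u = g u) -> is_derive x e g d.
Proof. by move=> H /funext <-. Qed.

Lemma isd_eq f x e d d' : is_derive x e f d -> d = d' -> is_derive x e f d'.
Proof. by move=> H <-. Qed.

Lemma isd_add f g x e a b : is_derive x e f a -> is_derive x e g b ->
  is_derive x e (fun u => f u + g u) (a + b).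
Proof. by move=> Hf Hg; apply: (isd_ext (is_deriveD Hf Hg)). Qed.

Lemma isd_opp f x e a : is_derive x e f a -> is_derive x e (fun u => - f u) (- a).
Proof. by move=> Hf; apply: (isd_ext (is_deriveN Hf)). Qed.

Lemma isd_scal f x e a (k : R) : is_derive x e f a ->
  is_derive x e (fun u => k * f u) (k * a).
Proof. by move=> Hf; apply: (isd_ext (is_deriveZ k Hf)). Qed.

Lemma isd_cst x e (k : R) : is_derive x e (fun _ : V => k) 0.
Proof. exact: (@is_derive_cst R V R k x e). Qed.

Lemma isd_sum (I : Type) (s : seq I) (F : I -> V -> R) (dF : I -> R) x e :
  (forall i, is_derive x e (F i) (dF i)) ->
  is_derive x e (fun u => \sum_(i <- s) F i u) (\sum_(i <- s) dF i).
Proof.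
move=> H; elim: s => [|i s IH].
  by rewrite big_nil; apply: (isd_ext (isd_cst x e 0)) => u; rewrite big_nil.
rewrite big_cons; apply: (isd_ext (isd_add (H i) IH)) => u.
by rewrite big_cons.
Qed.

Lemma isd_sin l x e d : is_derive x e l d ->
  is_derive x e (fun u => sin (l u)) (cos (l x) * d).
Proof.
move=> H; apply: isd_slice.
have H1 := isd_unslice H.
have H2 : is_derive ((fun t : R => l (t *: e + x)) 0) 1 (@sin R) (cos (l x)).
  by rewrite /= scale0r add0r; exact: is_derive_sin.
exact: (is_derive1_comp H2 H1).
Qed.

Lemma isd_cos l x e d : is_derive x e l d ->
  is_derive x e (fun u => cos (l u)) (- sin (l x) * d).
Proof.
move=> H; apply: isd_slice.
have H1 := isd_unslice H.
have H2 : is_derive ((fun t : R => l (t *: e + x)) 0) 1 (@cos R) (- sin (l x)).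
  by rewrite /= scale0r add0r; exact: is_derive_cos.
exact: (is_derive1_comp H2 H1).
Qed.

End Der.

Lemma isd_affine (R : realType) (V : normedModType R) (l : V -> R) x e (a : R) :
  (forall t : R, l (t *: e + x) = t * a + l x) -> is_derive x e l a.
Proof.
move=> H; apply: isd_slice.
have H1 := isd_add (isd_scal a (@is_derive_id R R 0 1)) (@isd_cst R R 0 1 (l x)).
rewrite mulr1 addr0 in H1.
apply: (isd_ext H1) => t /=.
by rewrite H mulrC.
Qed.

Lemma isd_conv (R : realType) (V : normedModType R) (f g : V -> R) x e d d' :
  is_derive x e f d -> (forall u, f u = g u) -> d = d' -> is_derive x e g d'.
Proof. by move=> H /funext <- <-. Qed.

Lemma isd_scalr (R : realType) (V : normedModType R) (f : V -> R) x e a (k : R) :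
  is_derive x e f a -> is_derive x e (fun u => f u * k) (a * k).
Proof.
move=> H; apply: (isd_conv (isd_scal k H)) => [u|]; exact: mulrC.
Qed.

Section P.
Variables (R : realType) (n : nat) (c : nat -> R).
Local Notation m := n.-1.
Local Notation V := 'rV[R]_n.-1.

Definition del (j k : nat) : R := (k == j.+2)%:R.

Lemma vget_lt (v : V) i (h : (i < m)%N) : vget v i = v 0 (Ordinal h).
Proof. by rewrite /vget insubT. Qed.

Lemma vget_ge (v : V) i : (m <= i)%N -> vget v i = 0.
Proof. by move=> h; rewrite /vget insubN // -leqNgt. Qed.

Lemma vget_lin (e x : V) (t : R) i : vget (t *: e + x) i = t * vget e i + vget x i.
Proof.
case: (ltnP i m) => h; first by rewrite !(vget_lt _ h) !mxE.
by rewrite !vget_ge // mulr0 addr0.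
Qed.

Lemma vget_ebas (j : 'I_m) i : vget (ebas R j) i = (i == j)%:R.
Proof.
case: (ltnP i m) => h; first by rewrite (vget_lt _ h) mxE.
rewrite vget_ge //; case: eqP => // E.
by move: (ltn_ord j); rewrite -E ltnNge h.
Qed.

Lemma ang_ebas (j : 'I_m) (x : V) t k :
  ang (t *: ebas R j + x) k = t * del j k + ang x k.
Proof.
rewrite /ang /del; case: ifP => k1.
  suff -> : (k == j.+2) = false by rewrite mulr0 addr0.
  by apply/negbTE; move: k1; case: eqP => // ->.
case: ifP => kn.
  rewrite vget_lin vget_ebas; congr (t * _%:R + _).
  by move: k1 => /negbT; rewrite -ltnNge => k2; rewrite -{2}(subnK k2) addn2 eqSS.
suff -> : (k == j.+2) = false by rewrite mulr0 add0r.
apply/negbTE; move: kn => /negbT; rewrite -ltnNge; case: eqP => // -> /=.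
move=> a; have b := ltn_ord j; lia.
Qed.

Definition lk (x : V) k := (ang x k.+1 - ang x k) / 2.
Definition dl (j k : nat) : R := (del j k.+1 - del j k) / 2.

Lemma lk_lin (j : 'I_m) x t k : lk (t *: ebas R j + x) k = t * dl j k + lk x k.
Proof. rewrite /lk /dl !ang_ebas; ring. Qed.

Lemma isd_ang (j : 'I_m) x k : is_derive x (ebas R j) (fun u => ang u k) (del j k).
Proof. by apply: isd_affine => t; rewrite ang_ebas. Qed.

Lemma isd_lk (j : 'I_m) x k : is_derive x (ebas R j) (fun u => lk u k) (dl j k).
Proof. by apply: isd_affine => t; rewrite lk_lin. Qed.

Definition F1 (j : 'I_m) (x : V) := - \sum_(1 <= k < n.+1) 2 * (cos (lk x k) * dl j k).
Definition G1d (j : 'I_m) (x : V) :=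
  \sum_(2 <= k < n.+1) (c k.-1 - c k) * (- sin (ang x k) * del j k).
Definition G2d (j : 'I_m) (x : V) :=
  \sum_(2 <= k < n.+1) (c k.-1 - c k) * (cos (ang x k) * del j k).
Definition D1 (j : 'I_m) (y : 'rV[R]_2) (x : V) := F1 j x + y 0 0 * G1d j x + y 0 1 * G2d j x.

Definition F2 (i j : 'I_m) (x : V) :=
  - \sum_(1 <= k < n.+1) 2 * ((- sin (lk x k) * dl i k) * dl j k).
Definition G1dd (i j : 'I_m) (x : V) :=
  \sum_(2 <= k < n.+1) (c k.-1 - c k) * ((- (cos (ang x k) * del i k)) * del j k).
Definition G2dd (i j : 'I_m) (x : V) :=
  \sum_(2 <= k < n.+1) (c k.-1 - c k) * ((- sin (ang x k) * del i k) * del j k).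
Definition D2 (i j : 'I_m) (y : 'rV[R]_2) (x : V) := F2 i j x + y 0 0 * G1dd i j x + y 0 1 * G2dd i j x.

Lemma isd_g1 j x : is_derive x (ebas R j) (g1 c) (G1d j x).
Proof.
have H := isd_add (isd_sum (index_iota 2 n.+1)
   (fun k => isd_scal (c k.-1 - c k) (isd_cos (isd_ang j x k))))
   (isd_opp (isd_cst x (ebas R j) (c 1 + c n))).
by apply: (isd_conv H) => [u|]; rewrite ?oppr0 ?addr0.
Qed.

Lemma isd_g2 j x : is_derive x (ebas R j) (g2 c) (G2d j x).
Proof.
have H := isd_sum (index_iota 2 n.+1)
   (fun k => isd_scal (c k.-1 - c k) (isd_sin (isd_ang j x k))).
by apply: (isd_conv H).
Qed.

Lemma isd_fobj j x : is_derive x (ebas R j) (@fobj R n) (F1 j x).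
Proof.
have H := isd_opp (isd_sum (index_iota 1 n.+1)
   (fun k => isd_scal 2 (isd_sin (isd_lk j x k)))).
by apply: (isd_conv H).
Qed.

Lemma isd_Lag j y x : is_derive x (ebas R j) (fun u => Lag c u y) (D1 j y x).
Proof.
have H := isd_add (isd_add (isd_fobj j x) (isd_scal (y 0 0) (isd_g1 j x)))
  (isd_scal (y 0 1) (isd_g2 j x)).
by apply: (isd_conv H).
Qed.

Lemma isd_D1 i j y x : is_derive x (ebas R i) (D1 j y) (D2 i j y x).
Proof.
have HF := isd_opp (isd_sum (index_iota 1 n.+1)
   (fun k => isd_scal 2 (isd_scalr (dl j k) (isd_cos (isd_lk i x k))))).
have HG1 := isd_sum (index_iota 2 n.+1)
   (fun k => isd_scal (c k.-1 - c k) (isd_scalr (del j k) (isd_opp (isd_sin (isd_ang i x k))))).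
have HG2 := isd_sum (index_iota 2 n.+1)
   (fun k => isd_scal (c k.-1 - c k) (isd_scalr (del j k) (isd_cos (isd_ang i x k)))).
have H := isd_add (isd_add HF (isd_scal (y 0 0) HG1)) (isd_scal (y 0 1) HG2).
by apply: (isd_conv H).
Qed.

Lemma HessE v y i j : Hess c v y i j = D2 i j y v.
Proof.
rewrite mxE.
have -> : 'D_(ebas R j) (fun u => Lag c u y) = D1 j y.
  by apply/funext => x; case: (isd_Lag j y x).
by case: (isd_D1 i j y v).
Qed.

Lemma JacE v k j : Jac c v k j = if k == 0 then G1d j v else G2d j v.
Proof.
rewrite mxE; case: ifP => _; first by case: (isd_g1 j v).
by case: (isd_g2 j v).
Qed.

End P.

Lemma quadform (R : realType) (m : nat) (u : 'rV[R]_m) (r : seq nat)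
  (a : nat -> R) (d : 'I_m -> nat -> R) :
  \sum_(j < m) (\sum_(i < m) u 0 i * (\sum_(k <- r) a k * d i k * d j k)) * u 0 j
  = \sum_(k <- r) a k * (\sum_(i < m) u 0 i * d i k) ^+ 2.
Proof.
transitivity (\sum_(j < m) \sum_(i < m) \sum_(k <- r)
    a k * ((u 0 i * d i k) * (u 0 j * d j k))).
  apply: eq_bigr => j _; rewrite mulr_suml; apply: eq_bigr => i _.
  rewrite mulr_sumr mulr_suml; apply: eq_bigr => k _; ring.
rewrite exchange_big /=.
under eq_bigr => i _ do rewrite exchange_big /=.
rewrite exchange_big /=; apply: eq_bigr => k _.
rewrite expr2 mulr_suml mulr_sumr; apply: eq_bigr => i _.
rewrite mulr_sumr mulr_sumr; apply: eq_bigr => j _; ring.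
Qed.

Lemma two_ord (z : 'I_2) : z = 0 \/ z = 1.
Proof. by case: z => [[|[|k]]] Hk; [left|right|by []]; apply/val_inj. Qed.

Section Star.
Variables (R : realType) (n : nat) (c : nat -> R).
Hypothesis hn : (2 <= n)%N.
Local Notation m := n.-1.
Local Notation ps := (phistar R n).

Lemma n_gt0 : (0 < n%:R :> R).
Proof. by rewrite ltr0n; case: n hn. Qed.

Lemma ang_star k : (1 <= k <= n.+1)%N -> ang ps k = (k.-1)%:R * pi / n%:R.
Proof.
move=> /andP[k1 kn]; rewrite /ang; case: ifP => k1'.
  have -> : k = 1%N by lia.
  by rewrite /= !mul0r.
case: ifP => kn'.
  have h : (k - 2 < m)%N by lia.
  rewrite (vget_lt _ h) mxE /=.
  by have -> : ((k - 2).+1 = k.-1)%N by lia.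
have -> : k = n.+1 by lia.
by rewrite /= mulrAC divff ?mul1r // gt_eqF // n_gt0.
Qed.

Lemma lk_star k : (1 <= k <= n)%N -> lk ps k = pi / n%:R / 2.
Proof.
move=> /andP[k1 kn]; rewrite /lk !ang_star; try (apply/andP; split; lia).
have -> : (k.+1.-1 = k.-1 + 1)%N by lia.
by rewrite natrD; field; rewrite gt_eqF // n_gt0.
Qed.

Lemma sin_lk_pos k : (1 <= k <= n)%N -> 0 < sin (lk ps k).
Proof.
move=> hk; rewrite lk_star //; apply: sin_gt0_pi; apply/andP; split.
  by rewrite !divr_gt0 // ?pi_gt0 ?n_gt0.
have npos := n_gt0; have ppos := pi_gt0 R.
rewrite ltr_pdivrMr // ltr_pdivrMr //.
have : (1 <= n%:R :> R) by rewrite ler1n; case: n hn.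
nra.
Qed.

Lemma sum_del (F : nat -> R) (j : 'I_m) :
  \sum_(2 <= k < n.+1) F k * del R j k = F j.+2.
Proof.
have jn : (j.+2 < n.+1)%N by have := ltn_ord j; lia.
have mem : j.+2 \in index_iota 2 n.+1 by rewrite mem_index_iota; lia.
rewrite (bigD1_seq j.+2 mem (iota_uniq _ _)) /=.
rewrite /del eqxx mulr1 big1 ?addr0 // => k /negbTE ->; by rewrite mulr0.
Qed.

Lemma Hstar : Hess c ps 0 =
  \matrix_(i, j) \sum_(1 <= k < n.+1) (2 * sin (lk ps k)) * dl R i k * dl R j k.
Proof.
apply/matrixP => i j; rewrite HessE mxE /D2 /F2 !mxE !mul0r !addr0.
rewrite -sumrN; apply: eq_bigr => k _; ring.
Qed.

Lemma Jstar k (j : 'I_m) : Jac c ps k j =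
  (c j.+1 - c j.+2) * (if k == 0 then - sin (ang ps j.+2) else cos (ang ps j.+2)).
Proof.
rewrite JacE /G1d /G2d; case: ifP => _.
  by under eq_bigr => i _ do rewrite mulrA; rewrite sum_del.
by under eq_bigr => i _ do rewrite mulrA; rewrite sum_del.
Qed.


Lemma quadmx (u : 'rV[R]_m) (r : seq nat) (a : nat -> R) (d : 'I_m -> nat -> R) :
  (u *m (\matrix_(i, j) \sum_(k <- r) a k * d i k * d j k) *m u^T) 0 0
  = \sum_(k <- r) a k * (\sum_(i < m) u 0 i * d i k) ^+ 2.
Proof.
rewrite -quadform mxE; apply: eq_bigr => j _; rewrite !mxE; congr (_ * _).
by apply: eq_bigr => i _; rewrite mxE.
Qed.

Lemma sum2 (F : 'I_2 -> R) : \sum_(k < 2) F k = F 0 + F 1.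
Proof. rewrite big_ord_recl big_ord1; congr (_ + F _); exact/val_inj. Qed.

Lemma U_zero (u : 'rV[R]_m) :
  (forall k, (1 <= k <= n)%N -> \sum_(i < m) u 0 i * dl R i k = 0) -> u = 0.
Proof.
move=> H.
pose U k := \sum_(i < m) u 0 i * del R i k.
have HU : forall k, (1 <= k <= n)%N -> U k.+1 = U k.
  move=> k hk; have := H k hk.
  have -> : \sum_(i < m) u 0 i * dl R i k = (U k.+1 - U k) / 2.
    by rewrite /U -sumrB mulr_suml; apply: eq_bigr => i _; rewrite /dl; ring.
  move=> /eqP; rewrite mulf_eq0 invr_eq0 pnatr_eq0 /= orbF subr_eq0.
  by move/eqP.
have U1 : U 1%N = 0 by rewrite /U big1 // => i _; rewrite /del /= mulr0.
have Uk : forall k, (1 <= k <= n.+1)%N -> U k = 0.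
  elim=> // k IH hk; case: k IH hk => [|k] IH hk; first exact: U1.
  rewrite HU; last by lia.
  by apply: IH; lia.
apply/rowP => i; rewrite mxE.
have <- : U i.+2 = u 0 i.
  rewrite /U (bigD1 i) //= /del eqxx mulr1 big1 ?addr0 // => i' ne.
  rewrite !eqSS; case: eqP => [/val_inj E|]; last by rewrite mulr0.
  by rewrite E eqxx in ne.
by apply: Uk; have := ltn_ord i; lia.
Qed.

Lemma Kstar_unit (j1 j2 : 'I_m) : (j1 < j2)%N ->
  c j1.+1 != c j1.+2 -> c j2.+1 != c j2.+2 -> KKT c ps 0 \in unitmx.
Proof.
move=> j12 d1 d2.
rewrite -row_free_unit; apply: inj_row_free => x Hx.
rewrite -(hsubmxK x) in Hx *.
move: (lsubmx x) (rsubmx x) Hx => u z.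
rewrite /KKT mul_row_block mulmx0 addr0 => /eqP; rewrite row_mx_eq0.
move=> /andP[/eqP H1 /eqP H2].
have Hu : u = 0.
  apply: U_zero => k hk.
  have Q : (u *m Hess c ps 0 *m u^T) 0 0 = 0.
    have -> : u *m Hess c ps 0 = - (z *m Jac c ps).
      by apply/eqP; rewrite -addr_eq0 H1.
    rewrite mulNmx -mulmxA.
    have -> : Jac c ps *m u^T = (u *m (Jac c ps)^T)^T by rewrite trmx_mul trmxK.
    by rewrite H2 trmx0 mulmx0 oppr0 mxE.
  move: Q; rewrite Hstar quadmx big_seq => /eqP; rewrite psumr_eq0; last first.
    move=> k' hk'; apply: mulr_ge0; last exact: sqr_ge0.
    by apply: mulr_ge0 => //; apply: ltW; apply: sin_lk_pos; move: hk'; rewrite mem_index_iota; lia.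
  move=> /allP Hall.
  have hk' : k \in index_iota 1 n.+1 by rewrite mem_index_iota; lia.
  have := Hall k hk'; rewrite hk' /=.
  rewrite mulf_eq0 sqrf_eq0 => /orP[|/eqP //].
  rewrite mulf_eq0 pnatr_eq0 /= => /eqP E.
  by have := sin_lk_pos hk; rewrite E ltxx.
move: H1; rewrite Hu mul0mx add0r => Hz.
have E j : z 0 0 * Jac c ps 0 j + z 0 1 * Jac c ps 1 j = 0.
  have := congr1 (fun M : 'M[R]_(1, m) => M 0 j) Hz.
  rewrite /= mxE sum2 => ->; by rewrite mxE.
have J0 j : Jac c ps 0 j = (c j.+1 - c j.+2) * - sin (ang ps j.+2) by rewrite Jstar.
have J1 j : Jac c ps 1 j = (c j.+1 - c j.+2) * cos (ang ps j.+2) by rewrite Jstar.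
pose t1 := ang ps j1.+2; pose t2 := ang ps j2.+2.
have E1 : z 0 0 * sin t1 - z 0 1 * cos t1 = 0.
  have : (c j1.+1 - c j1.+2) * (z 0 0 * sin t1 - z 0 1 * cos t1) = 0.
    by have E' := E j1; rewrite J0 J1 in E'; rewrite -[RHS]oppr0 -[in RHS]E' /t1; ring.
  by move=> /eqP; rewrite mulf_eq0 subr_eq0 (negbTE d1) /= => /eqP.
have E2 : z 0 0 * sin t2 - z 0 1 * cos t2 = 0.
  have : (c j2.+1 - c j2.+2) * (z 0 0 * sin t2 - z 0 1 * cos t2) = 0.
    by have E' := E j2; rewrite J0 J1 in E'; rewrite -[RHS]oppr0 -[in RHS]E' /t2; ring.
  by move=> /eqP; rewrite mulf_eq0 subr_eq0 (negbTE d2) /= => /eqP.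
have spos : 0 < sin (t2 - t1).
  have jm := ltn_ord j2.
  rewrite /t1 /t2 !ang_star; try (apply/andP; split; lia).
  apply: sin_gt0_pi; rewrite /= -mulrBl -mulrBl.
  have npos := n_gt0; have ppos := pi_gt0 R.
  have a1 : ((j1.+1)%:R < (j2.+1)%:R :> R) by rewrite ltr_nat; lia.
  have a2 : ((j2.+1)%:R < n%:R :> R) by rewrite ltr_nat; lia.
  have a3 : (0 <= (j1.+1)%:R :> R) by [].
  apply/andP; split.
    by rewrite divr_gt0 // mulr_gt0 // subr_gt0.
  rewrite ltr_pdivrMr //; nra.
have Z0 : z 0 0 = 0.
  have : z 0 0 * sin (t2 - t1) = 0.
    have -> : z 0 0 * sin (t2 - t1) = cos t1 * (z 0 0 * sin t2 - z 0 1 * cos t2)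
      - cos t2 * (z 0 0 * sin t1 - z 0 1 * cos t1) by rewrite sinB; ring.
    by rewrite E1 E2 !mulr0 subr0.
  by move=> /eqP; rewrite mulf_eq0 (gt_eqF spos) orbF => /eqP.
have Z1 : z 0 1 = 0.
  have : z 0 1 * sin (t2 - t1) = 0.
    have -> : z 0 1 * sin (t2 - t1) = sin t1 * (z 0 0 * sin t2 - z 0 1 * cos t2)
      - sin t2 * (z 0 0 * sin t1 - z 0 1 * cos t1) by rewrite sinB; ring.
    by rewrite E1 E2 !mulr0 subr0.
  by move=> /eqP; rewrite mulf_eq0 (gt_eqF spos) orbF => /eqP.
have -> : z = 0 by apply/rowP => k; rewrite mxE; case: (two_ord k) => ->.
by rewrite row_mx0.
Qed.

End Star.

Section Comb.
Variables (R : realType) (n : nat) (c : nat -> R).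
Hypothesis hn : (3 <= n)%N.
Hypothesis hc : forall j : nat, (1 <= j <= n)%N -> c j = 1 \/ c j = -1.

Lemma no_step (hrun : no_long_run n c) k0 : (k0 < n)%N ->
  ~ (forall k, (1 <= k <= n)%N -> c k = if (k0 < k)%N then c n else - c n).
Proof.
move=> k0n Hf; apply: (hrun k0); first lia.
have ck0 : cseq n c k0 = c n by rewrite /cseq k0n Hf ?ltnSn //; lia.
move=> t tn; rewrite ck0 modn_small; last lia.
rewrite /cseq; case: ifP => h.
  by rewrite Hf ?ifT //; lia.
rewrite Hf; last lia.
by rewrite ifF ?opprK //; apply/negbTE; lia.
Qed.

Lemma const_run a b : (forall j, (a <= j)%N -> (j < b)%N -> c j.+1 = c j.+2) ->
  forall k, (a <= k <= b)%N -> c k.+1 = c a.+1.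
Proof.
move=> H; elim=> [|k IH] /andP[h1 h2].
  by have -> : a = 0%N by lia.
case: (ltnP a k.+1) => h.
  rewrite -IH; last by apply/andP; split; lia.
  by rewrite (H k) //; lia.
by have -> : a = k.+1 by lia.
Qed.

Lemma two_changes_aux : ~ (exists j1 j2 : 'I_n.-1,
  [/\ (j1 < j2)%N, c j1.+1 != c j1.+2 & c j2.+1 != c j2.+2]) ->
  exists2 k0, (k0 < n)%N &
  (forall k, (1 <= k <= n)%N -> c k = if (k0 < k)%N then c n else - c n).
Proof.
move=> Hno.
have uniq1 : forall j1 j2, (j1 < n.-1)%N -> (j2 < n.-1)%N ->
    c j1.+1 != c j1.+2 -> c j2.+1 != c j2.+2 -> j1 = j2.
  move=> j1 j2 h1 h2 d1 d2; case: (ltngtP j1 j2) => // h.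
    by case: Hno; exists (Ordinal h1), (Ordinal h2); split.
  by case: Hno; exists (Ordinal h2), (Ordinal h1); split.
have [[j0 [j0m dj0]]|none] :=
  pselect (exists j0, (j0 < n.-1)%N /\ c j0.+1 != c j0.+2).
  exists j0.+1; first lia.
  have Hlo : forall j, (0 <= j)%N -> (j < j0)%N -> c j.+1 = c j.+2.
    move=> j _ hj; apply/eqP/negP => /negP dj.
    by have := uniq1 j j0 ltac:(lia) j0m dj dj0; lia.
  have Hhi : forall j, (j0.+1 <= j)%N -> (j < n.-1)%N -> c j.+1 = c j.+2.
    move=> j hj hj'; apply/eqP/negP => /negP dj.
    by have := uniq1 j j0 hj' j0m dj dj0; lia.
  have cn : c n = c j0.+2.
    have := const_run Hhi (k := n.-1) ltac:(lia).
    by have -> : n.-1.+1 = n by lia.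
  have opp : c j0.+1 = - c j0.+2.
    have := hc (j := j0.+1) ltac:(lia); have := hc (j := j0.+2) ltac:(lia).
    by case=> e2; case=> e1; move: dj0; rewrite e1 e2 ?opprK ?eqxx.
  move=> k hk; case: ifP => h.
    rewrite cn; have := const_run Hhi (k := k.-1) ltac:(lia).
    by have -> : k.-1.+1 = k by lia.
  rewrite cn -opp (const_run Hlo (k := j0)) ?leq0n ?leqnn //.
  have := const_run Hlo (k := k.-1) ltac:(lia).
  by have -> : k.-1.+1 = k by lia.
exists 0%N; first lia.
have Hall : forall j, (0 <= j)%N -> (j < n.-1)%N -> c j.+1 = c j.+2.
  move=> j _ hj; apply/eqP/negP => /negP dj.
  by apply: none; exists j.
have cn : c n = c 1%N.
  have := const_run Hall (k := n.-1) ltac:(lia).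
  by have -> : n.-1.+1 = n by lia.
move=> k hk; rewrite ifT; last lia.
rewrite cn; have := const_run Hall (k := k.-1) ltac:(lia).
by have -> : k.-1.+1 = k by lia.
Qed.

Lemma two_changes (hrun : no_long_run n c) : exists j1 j2 : 'I_n.-1,
  [/\ (j1 < j2)%N, c j1.+1 != c j1.+2 & c j2.+1 != c j2.+2].
Proof.
apply: contrapT => Hno; have [k0 k0n Hf] := two_changes_aux Hno.
exact: (no_step hrun k0n Hf).
Qed.

End Comb.

Section Cont.
Variables (R : realType) (n : nat) (c : nat -> R).
Local Notation m := n.-1.
Local Notation T := ('rV[R]_m * 'rV[R]_2)%type.
Variable w0 : T.

Definition CT (f : T -> R) := f x @[x --> w0] --> f w0.

Lemma ct_cst (k : R) : CT (fun _ => k).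
Proof. exact: cvg_cst. Qed.

Lemma ct_add f g : CT f -> CT g -> CT (fun x => f x + g x).
Proof. by move=> Hf Hg; apply: cvgD. Qed.

Lemma ct_mul f g : CT f -> CT g -> CT (fun x => f x * g x).
Proof. by move=> Hf Hg; apply: cvgM. Qed.

Lemma ct_opp f : CT f -> CT (fun x => - f x).
Proof. by move=> Hf; apply: cvgN. Qed.

Lemma ct_sin f : CT f -> CT (fun x => sin (f x)).
Proof. move=> Hf; have H := continuous_cvg _ (@continuous_sin R (f w0)) Hf; exact: H. Qed.

Lemma ct_cos f : CT f -> CT (fun x => cos (f x)).
Proof. move=> Hf; have H := continuous_cvg _ (@continuous_cos R (f w0)) Hf; exact: H. Qed.

Lemma ct_sum (I : Type) (r : seq I) (P : pred I) (F : I -> T -> R) :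
  (forall i, CT (F i)) -> CT (fun x => \sum_(i <- r | P i) F i x).
Proof.
move=> H; rewrite /CT; apply: cvg_big => //; first exact: add_continuous.
by move=> i _; exact: H.
Qed.

Lemma ct_c1 i : CT (fun x => x.1 0 i).
Proof.
have H := continuous_cvg _ (@coord_continuous R 1 m 0 i w0.1)
  (@cvg_fst _ _ (nbhs w0.1) (nbhs w0.2) _).
exact: H.
Qed.

Lemma ct_c2 i : CT (fun x => x.2 0 i).
Proof.
have H := continuous_cvg _ (@coord_continuous R 1 2 0 i w0.2)
  (@cvg_snd _ _ (nbhs w0.1) (nbhs w0.2) _).
exact: H.
Qed.

Lemma ct_vget k : CT (fun x => vget x.1 k).
Proof.
case: (ltnP k m) => h.
  have -> : (fun x : T => vget x.1 k) = (fun x => x.1 0 (Ordinal h)).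
    by apply/funext => x; rewrite (vget_lt _ h).
  exact: ct_c1.
have -> : (fun x : T => vget x.1 k) = (fun x => 0).
  by apply/funext => x; rewrite vget_ge.
exact: ct_cst.
Qed.

Lemma ct_ang k : CT (fun x => ang x.1 k).
Proof.
case h1: (k <= 1)%N.
  have -> : (fun x : T => ang x.1 k) = (fun _ => 0) by apply/funext => x; rewrite /ang h1.
  exact: ct_cst.
case h2: (k <= n)%N.
  have -> : (fun x : T => ang x.1 k) = (fun x => vget x.1 (k - 2)).
    by apply/funext => x; rewrite /ang h1 h2.
  exact: ct_vget.
have -> : (fun x : T => ang x.1 k) = (fun _ => pi) by apply/funext => x; rewrite /ang h1 h2.
exact: ct_cst.
Qed.

Lemma ct_lk k : CT (fun x => lk x.1 k).
Proof.
rewrite /lk; apply: ct_mul; last exact: ct_cst.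
by apply: ct_add; [exact: ct_ang | apply: ct_opp; exact: ct_ang].
Qed.

Ltac ctac := repeat first [ apply: ct_add | apply: ct_mul | apply: ct_opp
  | apply: ct_sin | apply: ct_cos | apply: ct_sum => ? | apply: ct_lk
  | apply: ct_ang | apply: ct_c2 | apply: ct_cst ].

Lemma ct_D2 i j : CT (fun x => D2 c i j x.2 x.1).
Proof. rewrite /D2 /F2 /G1dd /G2dd; ctac. Qed.

Lemma ct_Jac k j : CT (fun x => Jac c x.1 k j).
Proof.
have -> : (fun x : T => Jac c x.1 k j) =
   (fun x => if k == 0 then G1d c j x.1 else G2d c j x.1).
  by apply/funext => x; rewrite JacE.
case: (k == 0); rewrite /G1d /G2d; ctac.
Qed.

Lemma ct_KKT a b : CT (fun x => KKT c x.1 x.2 a b).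
Proof.
case: (split_ordP a) => a' ->; case: (split_ordP b) => b' ->.
- have -> : (fun x : T => KKT c x.1 x.2 (lshift 2 a') (lshift 2 b')) =
     (fun x => D2 c a' b' x.2 x.1).
    by apply/funext => x; rewrite /KKT block_mxEul HessE.
  exact: ct_D2.
- have -> : (fun x : T => KKT c x.1 x.2 (lshift 2 a') (rshift m b')) =
     (fun x => Jac c x.1 b' a').
    by apply/funext => x; rewrite /KKT block_mxEur mxE.
  exact: ct_Jac.
- have -> : (fun x : T => KKT c x.1 x.2 (rshift m a') (lshift 2 b')) =
     (fun x => Jac c x.1 a' b').
    by apply/funext => x; rewrite /KKT block_mxEdl.
  exact: ct_Jac.
- have -> : (fun x : T => KKT c x.1 x.2 (rshift m a') (rshift m b')) =
     (fun x => 0).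
    by apply/funext => x; rewrite /KKT block_mxEdr mxE.
  exact: ct_cst.
Qed.

Lemma ct_det : CT (fun x => \det (KKT c x.1 x.2)).
Proof.
rewrite /CT /determinant; apply: cvg_big => //; first exact: add_continuous.
move=> s _; apply: cvgMl_tmp.
apply: cvg_big => //; first exact: mul_continuous.
by move=> i _; exact: ct_KKT.
Qed.

End Cont.

Theorem lemma4 (R : realType) (n : nat) (c : nat -> R)
  (hn : (3 <= n)%N)
  (hc : forall j : nat, (1 <= j <= n)%N -> c j = 1 \/ c j = -1)
  (hrun : no_long_run n c) :
  \forall w \near (@phistar R n, (0 : 'rV[R]_2)),
    @KKT R n c w.1 w.2 \in unitmx.
Proof.
have [j1 [j2 [j12 d1 d2]]] : exists j1 j2 : 'I_n.-1,
    [/\ (j1 < j2)%N, c j1.+1 != c j1.+2 & c j2.+1 != c j2.+2].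
  exact: two_changes.
have hn2 : (2 <= n)%N by apply: leq_trans hn.
have U := Kstar_unit hn2 j12 d1 d2.
have nz : \det (KKT c (phistar R n, (0 : 'rV[R]_2)).1 (phistar R n, (0 : 'rV[R]_2)).2) != 0.
  by rewrite -unitfE -unitmxE.
have ct := ct_det (c := c) (w0 := (phistar R n, (0 : 'rV[R]_2))).
rewrite /CT in ct.
have H := cvgr_neq0 _ ct nz.
near=> w; rewrite unitmxE unitfE; near: w; exact: H.
Unshelve. all: by end_near.
Qed.
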